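(* For every $(s_1,s_2,s_3)\in\mathbb{C}^3$ and $Z\in\mathcal{H}_3$, \[ p_{s_1,s_2,s_3}(-Z^{-1})=e^{(s_1+2s_2+3s_3)\pi i}\,p_{s_2,s_1,-s_1-s_2-s_3}(WZW),\qquad W=\begin{pmatrix}0&0&1\\0&1&0\\1&0&0\end{pmatrix}. \]
   Context: $\mathcal{H}_n$ is the Siegel upper half space of degree $n$ and $\mathcal{P}_n$ the cone of real symmetric positive definite $n\times n$ matrices. Let $h_n:\mathcal{H}_n\to\mathbb{C}$ be the unique holomorphic function with $e^{h_n(Z)}=\det Z$ and $h_n(iY)=\frac{\pi i n}{2}+\log\det Y$ for $Y\in\mathcal{P}_n$. For $Z\in\mathcal{H}_3$ with upper left $j\times j$ block $Z_j$, $p_{s,w,u}(Z)=e^{s h_1(Z_1)}e^{w h_2(Z_2)}e^{u h_3(Z)}$. *)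

(* Defs.v *)
From HB Require Import structures.
From mathcomp Require Import all_boot all_order all_algebra.
From mathcomp Require Import all_classical all_reals.
From mathcomp Require Import all_analysis.
From mathcomp Require Import complex.
Set Implicit Arguments. Unset Strict Implicit. Unset Printing Implicit Defensive.
Import Order.TTheory GRing.Theory Num.Theory.
Local Open Scope ring_scope.
Local Open Scope complex_scope.

Section Defs.
Variable R : realType.
Local Notation C := R[i].

Definition cexp (z : C) : C :=
  (expR (complex.Re z))%:C * (cos (complex.Im z) +i* sin (complex.Im z)).

Definition Remx n (Z : 'M[C]_n) : 'M[R]_n := map_mx (@complex.Re R) Z.
Definition Immx n (Z : 'M[C]_n) : 'M[R]_n := map_mx (@complex.Im R) Z.

Definition posdef n (Y : 'M[R]_n) : Prop :=
  Y^T = Y /\ forall v : 'cV[R]_n, v != 0 -> 0 < (v^T *m Y *m v) 0 0.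

Definition siegel n (Z : 'M[C]_n) : Prop := Z^T = Z /\ posdef (Immx Z).

Definition iY n (Y : 'M[R]_n) : 'M[C]_n := map_mx (fun y => 0 +i* y) Y.

Definition symE n (k l : 'I_n) : 'M[C]_n :=
  \matrix_(a, b) (if ((a == k) && (b == l)) || ((a == l) && (b == k)) then 1 else 0).

Definition cderivable0 (f : C -> C) : Prop :=
  exists L : C, forall eps : R, 0 < eps -> exists2 del : R, 0 < del &
    forall w : C, w != 0 -> `|w| < (del%:C) ->
      `|(f w - f 0) / w - L| < eps%:C.

(* Holomorphy on H_n, in the symmetric coordinates (z_{kl})_{k <= l}
   (separate holomorphy; equivalent to joint holomorphy by Hartogs). *)
Definition holo_siegel n (h : 'M[C]_n -> C) : Prop :=
  forall Z, siegel Z -> forall k l : 'I_n,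
    cderivable0 (fun w => h (Z + w *: symE k l)).

Definition is_hn n (h : 'M[C]_n -> C) : Prop :=
  [/\ holo_siegel h,
      forall Z, siegel Z -> cexp (h Z) = \det Z &
      forall Y : 'M[R]_n, posdef Y ->
        h (iY Y) = (0 +i* (pi * n%:R / 2)) + (ln (\det Y))%:C ].

Definition ulblock j n (hjn : (j <= n)%N) (Z : 'M[C]_n) : 'M[C]_j :=
  \matrix_(a, b) Z (widen_ord hjn a) (widen_ord hjn b).

Definition pfun (h1 : 'M[C]_1 -> C) (h2 : 'M[C]_2 -> C) (h3 : 'M[C]_3 -> C)
  (s w u : C) (Z : 'M[C]_3) : C :=
  cexp (s * h1 (ulblock (isT : (1 <= 3)%N) Z)) *
  cexp (w * h2 (ulblock (isT : (2 <= 3)%N) Z)) *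
  cexp (u * h3 Z).

Definition Wmx : 'M[C]_3 :=
  \matrix_(a, b) (if (a + b == 2)%N then 1 else 0).

End Defs.

(* Main.v *)
Require Import Defs.
From HB Require Import structures.
From mathcomp Require Import all_boot all_order all_algebra.
From mathcomp Require Import all_classical all_reals.
From mathcomp Require Import all_analysis.
From mathcomp Require Import complex.
From mathcomp Require Import ring lra.
Import Order.TTheory GRing.Theory Num.Theory.
Local Open Scope ring_scope.
Local Open Scope complex_scope.
Local Open Scope classical_set_scope.
Import numFieldTopology.Exports numFieldNormedType.Exports.
Set Implicit Arguments. Unset Strict Implicit. Unset Printing Implicit Defensive.

Section S.
Variable R : realType.
Local Notation C := R[i].
Implicit Types x y z w : C.
Local Notation Re := (@complex.Re R).
Local Notation Im := (@complex.Im R).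

Lemma cE x y : Re x = Re y -> Im x = Im y -> x = y.
Proof. by case: x y => a b [c d] /= -> ->. Qed.
Lemma ReD x y : Re (x + y) = Re x + Re y. Proof. by case: x y => a b [c d]. Qed.
Lemma ImD x y : Im (x + y) = Im x + Im y. Proof. by case: x y => a b [c d]. Qed.
Lemma ReN x : Re (- x) = - Re x. Proof. by case: x. Qed.
Lemma ImN x : Im (- x) = - Im x. Proof. by case: x. Qed.
Lemma ReB x y : Re (x - y) = Re x - Re y. Proof. by rewrite ReD ReN. Qed.
Lemma ImB x y : Im (x - y) = Im x - Im y. Proof. by rewrite ImD ImN. Qed.
Lemma ReM x y : Re (x * y) = Re x * Re y - Im x * Im y. Proof. by case: x y => a b [c d]. Qed.
Lemma ImM x y : Im (x * y) = Re x * Im y + Im x * Re y. Proof. by case: x y => a b [c d]. Qed.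
Lemma ReR (k : R) : Re (k%:C) = k. Proof. by []. Qed.
Lemma ImR (k : R) : Im (k%:C) = 0. Proof. by []. Qed.
Lemma Re0 : Re (0 : C) = 0. Proof. by []. Qed.
Lemma Im0 : Im (0 : C) = 0. Proof. by []. Qed.
Lemma Re1 : Re (1 : C) = 1. Proof. by []. Qed.
Lemma Im1 : Im (1 : C) = 0. Proof. by []. Qed.
Lemma ReV x : Re (x^-1) = Re x / (Re x ^+ 2 + Im x ^+ 2). Proof. by case: x. Qed.
Lemma ImV x : Im (x^-1) = - (Im x / (Re x ^+ 2 + Im x ^+ 2)). Proof. by case: x. Qed.
Lemma ReX x : Re (x ^+ 2) = Re x ^+ 2 - Im x ^+ 2. Proof. by rewrite expr2 ReM -!expr2. Qed.
Lemma ImX x : Im (x ^+ 2) = (Re x * Im x) *+ 2. Proof. by rewrite expr2 ImM mulrC mulr2n. Qed.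
Lemma ReMn x n : Re (x *+ n) = Re x *+ n.
Proof. by elim: n => // n IH; rewrite !mulrS ReD IH. Qed.
Lemma ImMn x n : Im (x *+ n) = Im x *+ n.
Proof. by elim: n => // n IH; rewrite !mulrS ImD IH. Qed.

Lemma Rec (a b : R) : Re (a +i* b) = a. Proof. by []. Qed.
Lemma Imc (a b : R) : Im (a +i* b) = b. Proof. by []. Qed.
Lemma Rei : Re ('i : C) = 0. Proof. by []. Qed.
Lemma Imi : Im ('i : C) = 1. Proof. by []. Qed.
Definition ReIm := (Rec, Imc, ReD, ImD, ReN, ImN, ReM, ImM, ReR, ImR, Re0, Im0, Re1, Im1, ReX, ImX).


Lemma cexpD x y : cexp (x + y) = cexp x * cexp y.
Proof.
rewrite /cexp !ReD !ImD expRD sinD cosD.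
apply: cE; rewrite !ReIm; ring.
Qed.

Lemma cexp0 : cexp (0 : C) = 1.
Proof. by rewrite /cexp Re0 Im0 expR0 cos0 sin0; apply: cE; rewrite !ReIm; ring. Qed.

Lemma cexp_neq0 x : cexp x != 0.
Proof.
apply/eqP => H.
have : cexp x * cexp (- x) = 1 by rewrite -cexpD subrr cexp0.
by rewrite H mul0r => /eqP; rewrite eq_sym oner_eq0.
Qed.

Lemma cexp_eq1 x : cexp x = 1 -> [/\ Re x = 0, cos (Im x) = 1 & sin (Im x) = 0].
Proof.
rewrite /cexp => H.
have H1 : expR (Re x) * cos (Im x) = 1 by move: (congr1 Re H); rewrite !ReIm; lra.
have H2 : expR (Re x) * sin (Im x) = 0 by move: (congr1 Im H); rewrite !ReIm; lra.
have Hp := expR_gt0 (Re x).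
have Hs : sin (Im x) = 0.
  by move: H2 => /eqP; rewrite mulf_eq0 gt_eqF //= => /eqP.
have Hc2 := cos2Dsin2 (Im x).
rewrite Hs expr0n /= addr0 in Hc2.
have Hc : cos (Im x) = 1 \/ cos (Im x) = -1.
  move/eqP: Hc2; rewrite -subr_eq0 (_ : _ - 1 = (cos (Im x) - 1) * (cos (Im x) + 1)); last by ring.
  by rewrite mulf_eq0 => /orP [/eqP H3| /eqP H3]; [left|right]; lra.
case: Hc => Hc.
  rewrite Hc mulr1 in H1.
  split => //; apply: expR_inj; by rewrite H1 expR0.
clear H; rewrite Hc in H1; nra.
Qed.


Definition nc x : R := Num.sqrt (Re x ^+ 2 + Im x ^+ 2).
Lemma normE x : `|x| = (nc x)%:C.
Proof. by rewrite normc_def. Qed.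
Lemma nc_ge0 x : 0 <= nc x. Proof. exact: sqrtr_ge0. Qed.
Lemma nc_D x y : nc (x + y) <= nc x + nc y.
Proof. have := ler_normD x y; by rewrite !normE -rmorphD /= lecR. Qed.
Lemma nc_M x y : nc (x * y) = nc x * nc y.
Proof. have := normrM x y; rewrite !normE -rmorphM /=; by case. Qed.
Lemma nc_N x : nc (- x) = nc x.
Proof. have := normrN x; rewrite !normE; by case. Qed.
Lemma nc_R (k : R) : nc k%:C = `|k|.
Proof. by rewrite /nc ReR ImR expr0n addr0 sqrtr_sqr. Qed.
Lemma nc_Re x : `|Re x| <= nc x.
Proof.
rewrite /nc -(sqrtr_sqr (Re x)) ler_sqrt ?lerDl ?sqr_ge0 //.
by rewrite addr_ge0 ?sqr_ge0.
Qed.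
Lemma nc_Im x : `|Im x| <= nc x.
Proof.
rewrite /nc -(sqrtr_sqr (Im x)) ler_sqrt ?lerDr ?sqr_ge0 //.
by rewrite addr_ge0 ?sqr_ge0.
Qed.
Lemma nc_le x : nc x <= `|Re x| + `|Im x|.
Proof.
rewrite /nc -(ger0_norm (addr_ge0 (normr_ge0 (Re x)) (normr_ge0 (Im x)))).
rewrite -sqrtr_sqr ler_sqrt; last by rewrite sqr_ge0.
have e1 := real_normK (num_real (Re x)).
have e2 := real_normK (num_real (Im x)).
have h1 := normr_ge0 (Re x). have h2 := normr_ge0 (Im x).
rewrite -e1 -e2; nra.
Qed.
Lemma nc_eq0 x : nc x = 0 -> x = 0.
Proof. move=> H; apply/normr0_eq0; by rewrite normE H. Qed.


Definition ccont (f : R -> C) (t : R) :=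
  (fun s : R => Re (f s)) @ t --> Re (f t) /\ (fun s : R => Im (f s)) @ t --> Im (f t).

Lemma ccontP f t : ccont f t <-> forall e, 0 < e -> exists2 d, 0 < d &
  forall s, `|s - t| < d -> nc (f s - f t) < e.
Proof.
split.
  case=> /cvgrPdist_lt H1 /cvgrPdist_lt H2 e e0.
  have e20 : 0 < e / 2 by rewrite divr_gt0.
  move: (H1 _ e20) (H2 _ e20) => /nbhs_ballP [d1 d10 Hd1] /nbhs_ballP [d2 d20 Hd2].
  exists (Num.min d1 d2); first by rewrite lt_min d10 d20.
  move=> s Hs.
  have hs1 : ball t d1 s by rewrite /ball /= distrC; apply: (lt_le_trans Hs); rewrite ge_min lexx.
  have hs2 : ball t d2 s by rewrite /ball /= distrC; apply: (lt_le_trans Hs); rewrite ge_min lexx orbT.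
  move: (Hd1 _ hs1) (Hd2 _ hs2) => /= a1 a2.
  apply: (le_lt_trans (nc_le _)).
  rewrite ReB ImB distrC [`|Im _ - _|]distrC.
  have -> : e = e / 2 + e / 2 by rewrite -splitr.
  exact: ltrD.
move=> H; split; apply/cvgrPdist_lt => e e0; have [d d0 Hd] := H e e0;
  apply/nbhs_ballP; exists d => // s; rewrite /ball /= => Hs.
  rewrite distrC -ReB; apply: (le_lt_trans (nc_Re _)); apply: Hd; by rewrite distrC.
rewrite distrC -ImB; apply: (le_lt_trans (nc_Im _)); apply: Hd; by rewrite distrC.
Qed.


Lemma ccont_cst (a : C) t : ccont (fun _ => a) t.
Proof. by split; apply: cvg_cst. Qed.

Lemma ccont_R t : ccont (fun s => s%:C) t.
Proof. by split; [apply: cvg_id | apply: cvg_cst]. Qed.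

Lemma ccontD f g t : ccont f t -> ccont g t -> ccont (fun s => f s + g s) t.
Proof.
case=> f1 f2 [g1 g2]; split.
  rewrite ReD; under eq_fun do rewrite ReD; exact: cvgD.
rewrite ImD; under eq_fun do rewrite ImD; exact: cvgD.
Qed.

Lemma ccontN f t : ccont f t -> ccont (fun s => - f s) t.
Proof.
case=> f1 f2; split.
  rewrite ReN; under eq_fun do rewrite ReN; exact: cvgN.
rewrite ImN; under eq_fun do rewrite ImN; exact: cvgN.
Qed.

Lemma ccontM f g t : ccont f t -> ccont g t -> ccont (fun s => f s * g s) t.
Proof.
case=> f1 f2 [g1 g2]; split.
  rewrite ReM; under eq_fun do rewrite ReM; apply: cvgB; exact: cvgM.
rewrite ImM; under eq_fun do rewrite ImM; apply: cvgD; exact: cvgM.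
Qed.

Lemma ccontV f t : f t != 0 -> ccont f t -> ccont (fun s => (f s)^-1) t.
Proof.
move=> ft0 [f1 f2].
have n0 : Re (f t) ^+ 2 + Im (f t) ^+ 2 != 0.
  apply/eqP => H; move/eqP: ft0; apply; apply: cE; rewrite ?Re0 ?Im0.
    by apply/eqP; move/eqP: H; rewrite paddr_eq0 ?sqr_ge0 // !sqrf_eq0 => /andP[].
  by apply/eqP; move/eqP: H; rewrite paddr_eq0 ?sqr_ge0 // !sqrf_eq0 => /andP[].
have cn : (fun s => Re (f s) ^+ 2 + Im (f s) ^+ 2) @ t --> Re (f t) ^+ 2 + Im (f t) ^+ 2.
  apply: cvgD; rewrite expr2; under eq_fun do rewrite expr2; exact: cvgM.
split.
  rewrite ReV; under eq_fun do rewrite ReV; apply: cvgM => //; exact: cvgV.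
rewrite ImV; under eq_fun do rewrite ImV; apply: cvgN; apply: cvgM => //; exact: cvgV.
Qed.

Lemma ccontB f g t : ccont f t -> ccont g t -> ccont (fun s => f s - g s) t.
Proof. by move=> ? ?; apply: ccontD => //; apply: ccontN. Qed.

Lemma ccont_div f g t : g t != 0 -> ccont f t -> ccont g t -> ccont (fun s => f s / g s) t.
Proof. by move=> ? ? ?; apply: ccontM => //; apply: ccontV. Qed.

Lemma ccont_sum (I : Type) (r : seq I) (F : I -> R -> C) t :
  (forall i, ccont (F i) t) -> ccont (fun s => \sum_(i <- r) F i s) t.
Proof.
move=> H; elim: r => [|a r IH].
  under eq_fun do rewrite big_nil; exact: ccont_cst.
under eq_fun do rewrite big_cons; exact: ccontD.
Qed.

Lemma ccont_prod (I : Type) (r : seq I) (F : I -> R -> C) t :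
  (forall i, ccont (F i) t) -> ccont (fun s => \prod_(i <- r) F i s) t.
Proof.
move=> H; elim: r => [|a r IH].
  under eq_fun do rewrite big_nil; exact: ccont_cst.
under eq_fun do rewrite big_cons; exact: ccontM.
Qed.

Definition Ccont (g : C -> C) (z : C) := forall e, 0 < e -> exists2 d, 0 < d &
  forall w, nc (w - z) < d -> nc (g w - g z) < e.

Lemma ccont_comp g f t : Ccont g (f t) -> ccont f t -> ccont (fun s => g (f s)) t.
Proof.
move=> Hg /ccontP Hf; apply/ccontP => e e0.
have [d d0 Hd] := Hg e e0.
have [d' d'0 Hd'] := Hf d d0.
exists d' => // s Hs; exact/Hd/Hd'.
Qed.

Lemma ccont_det n (M E : 'M[C]_n) t :
  ccont (fun s => \det (M + s%:C *: E)) t.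
Proof.
rewrite /ccont; under eq_fun do rewrite /determinant.
apply: ccont_sum => sg; apply: ccontM; first exact: ccont_cst.
apply: ccont_prod => i; under eq_fun do rewrite !mxE.
apply: ccontD; first exact: ccont_cst.
apply: ccontM; [exact: ccont_R | exact: ccont_cst].
Qed.


Lemma constancy (phi : R -> C) : (forall t, ccont phi t) ->
  (forall t, cexp (phi t) = 1) -> forall x : R, phi x = phi 0.
Proof.
move=> Hc He x.
have HR t : Re (phi t) = 0 by case: (cexp_eq1 (He t)).
have Hcos t : cos (Im (phi t)) = 1 by case: (cexp_eq1 (He t)).
have Hsin t : sin (Im (phi t)) = 0 by case: (cexp_eq1 (He t)).
pose psi s := Im (phi s).
have cpsi : continuous psi by move=> t; exact: (Hc t).2.
suff : psi x = psi 0 by move=> H; apply: cE; rewrite ?HR.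
apply/eqP; apply/negPn/negP => Hne.
have cy : cos (psi x - psi 0) = 1.
  by rewrite cosB /psi !Hcos !Hsin; ring.
have ivt : forall v, (psi 0 <= v <= psi x) \/ (psi x <= v <= psi 0) ->
    exists c, psi c = v.
  move=> v Hv; case: (leP 0 x) => hx.
    have cw : {within `[0, x], continuous psi} by apply: continuous_subspaceT.
    have [|c _ Hc'] := @IVT R psi 0 x v hx cw; last by exists c.
    rewrite ge_min le_max; case: Hv => /andP [h1 h2]; by rewrite ?h1 ?h2 ?orbT.
  have cw : {within `[x, 0], continuous psi} by apply: continuous_subspaceT.
  have [|c _ Hc'] := @IVT R psi x 0 v (ltW hx) cw; last by exists c.
  rewrite ge_min le_max; case: Hv => /andP [h1 h2]; by rewrite ?h1 ?h2 ?orbT.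
have pi0 := pi_gt0 R.
have big : pi < `|psi x - psi 0|.
  rewrite ltNge; apply/negP => Hle.
  have hy0 : 0 < `|psi x - psi 0| by rewrite normr_gt0 subr_eq0.
  have := @ltr_cos R 0 `|psi x - psi 0|.
  rewrite !in_itv /= normr_ge0 Hle lexx (ltW pi0) => /(_ isT isT).
  by rewrite cos_norm cy cos0 ltxx hy0.
case: (ltP (psi 0) (psi x)) => hlt.
  rewrite gtr0_norm ?subr_gt0 // in big.
  have hv : psi 0 <= psi 0 + pi <= psi x.
    apply/andP; split; [by rewrite lerDl ltW | by rewrite -lerBrDl ltW].
  have [c Hc'] := ivt _ (or_introl hv).
  by move: (Hcos c); rewrite -/(psi c) Hc' cosDpi Hcos => H; lra.
rewrite ler0_norm ?subr_le0 // opprB in big.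
have hv : psi x <= psi 0 - pi <= psi 0.
  apply/andP; split; last by rewrite gerBl ltW.
  by rewrite lerBrDl -lerBrDr ltW.
have [c Hc'] := ivt _ (or_intror hv).
move: (Hcos c); rewrite -/(psi c) Hc' cosB cospi sinpi Hcos => H; lra.
Qed.


Lemma symE_tr n (k l : 'I_n) : (symE R k l)^T = symE R k l.
Proof. apply/matrixP => a b; rewrite !mxE; congr (if _ then _ else _); by case: (a == k); case: (b == l); case: (a == l); case: (b == k). Qed.

Lemma symE_real n (k l : 'I_n) a b : Im (symE R k l a b) = 0 /\ (symE R k l a b = 0 \/ symE R k l a b = 1).
Proof. rewrite mxE; case: ifP => _; [split; [exact: Im1 | by right] | split; [exact: Im0 | by left]]. Qed.

Lemma siegel_move n (Z : 'M[C]_n) k l (x : R) :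
  siegel Z -> siegel (Z + x%:C *: symE R k l).
Proof.
case=> HT [HY1 HY2].
have HIm : Immx (Z + x%:C *: symE R k l) = Immx Z.
  apply/matrixP => a b; rewrite !mxE ImD ImM ImR.
  by case: ifP => _; rewrite ?Im1 ?Im0 mulr0 mul0r !addr0.
split; first by rewrite linearD /= linearZ /= HT symE_tr.
by rewrite HIm.
Qed.

Definition Zs n (Z : 'M[C]_n) (s : seq ('I_n * 'I_n)) : 'M[C]_n :=
  \matrix_(a, b) ((if ((a, b) \in s) || ((b, a) \in s) then Re (Z a b) else 0) +i* Im (Z a b)).

Lemma Zs_nil n (Z : 'M[C]_n) : Zs Z [::] = iY (Immx Z).
Proof. by apply/matrixP => a b; rewrite !mxE. Qed.

Lemma Zs_siegel n (Z : 'M[C]_n) s : siegel Z -> siegel (Zs Z s).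
Proof.
case=> HT HY.
have HZ a b : Z b a = Z a b by rewrite -[in RHS]HT mxE.
rewrite /siegel; have -> : Immx (Zs Z s) = Immx Z by apply/matrixP => a b; rewrite !mxE.
split => //; apply/matrixP => a b; rewrite !mxE HZ orbC //.
Qed.

Lemma Zs_cons n (Z : 'M[C]_n) s (k l : 'I_n) : Z^T = Z -> (k <= l)%N ->
  (k, l) \notin s -> all (fun p : 'I_n * 'I_n => (p.1 <= p.2)%N) s ->
  Zs Z ((k, l) :: s) = Zs Z s + (Re (Z k l))%:C *: symE R k l.
Proof.
move=> HT hkl hp hs.
have HZ a b : Z b a = Z a b by rewrite -[in RHS]HT mxE.
apply/matrixP => a b; rewrite !mxE !in_cons !xpair_eqE.
case E: (((a == k) && (b == l)) || ((a == l) && (b == k))).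
  have [h1 h2] : (a, b) \notin s /\ (b, a) \notin s.
    have nin : (l, k) \notin s.
      apply/negP => Hin; move/allP: hs => /(_ _ Hin) /= hlk.
      have ekl : k = l by apply/val_inj/eqP; rewrite eqn_leq hkl hlk.
      by move: hp; rewrite -ekl in Hin *; rewrite Hin.
    by case/orP: E => /andP [/eqP -> /eqP ->].
  rewrite (negbTE h1) (negbTE h2) !orbF.
  have -> : Z a b = Z k l.
    by case/orP: E => /andP [/eqP -> /eqP ->] //; rewrite HZ.
  move: E; rewrite andbC [(b == k) && _]andbC => ->.
  by apply: cE; rewrite !ReIm; ring.
have -> : ((a == k) && (b == l)) = false by move: E; case: (_ && _).
have -> : ((b == k) && (a == l)) = false by move: E; case: (a == k); case: (b == l); case: (a == l); case: (b == k).
by rewrite /= mulr0 addr0.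
Qed.

Definition Pairs n : seq ('I_n * 'I_n) :=
  seq.filter (fun p : 'I_n * 'I_n => (p.1 <= p.2)%N) (enum (predT : pred ('I_n * 'I_n))).

Lemma mem_Pairs n (p : 'I_n * 'I_n) : (p \in Pairs n) = (p.1 <= p.2)%N.
Proof. rewrite /Pairs mem_filter mem_enum andbT //. Qed.

Lemma Zs_full n (Z : 'M[C]_n) : Zs Z (Pairs n) = Z.
Proof.
apply/matrixP => a b; rewrite !mxE !mem_Pairs /=.
by rewrite leq_total; case: (Z a b).
Qed.

Lemma path_zero n (G : 'M[C]_n -> C) :
  (forall Z, siegel Z -> cexp (G Z) = 1) ->
  (forall Z, siegel Z -> forall k l t, ccont (fun s => G (Z + s%:C *: symE R k l)) t) ->
  (forall Y, posdef Y -> G (iY Y) = 0) ->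
  forall Z, siegel Z -> G Z = 0.
Proof.
move=> He Hc H0 Z HZ.
have HT : Z^T = Z by case: HZ.
suff : forall s, uniq s -> all (fun p : 'I_n * 'I_n => (p.1 <= p.2)%N) s -> G (Zs Z s) = 0.
  move=> /(_ (Pairs n)); rewrite Zs_full; apply.
    by rewrite filter_uniq // enum_uniq.
  by apply/allP => p; rewrite mem_filter => /andP [].
elim=> [|[k l] s IH] /=.
  move=> _ _; rewrite Zs_nil; apply: H0; by case: HZ.
move=> /andP [hp hu] /andP [hkl hs].
rewrite Zs_cons //.
have HZs := Zs_siegel s HZ.
pose phi t := G (Zs Z s + t%:C *: symE R k l).
have := @constancy phi (Hc _ HZs k l) (fun t => He _ (siegel_move k l t HZs)) (Re (Z k l)).
rewrite /phi => ->; rewrite scale0r addr0; exact: IH.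
Qed.


Lemma cder_cont0 (f : C -> C) : cderivable0 f -> forall e, 0 < e ->
  exists2 d, 0 < d & forall w, nc w < d -> nc (f w - f 0) < e.
Proof.
case=> L HL e e0.
have [d1 d10 Hd1] := HL 1 ltr01.
have hL := nc_ge0 L.
exists (Num.min d1 (e / (1 + nc L))).
  by rewrite lt_min d10 divr_gt0 // ltr_pwDl.
move=> w Hw.
have [->|w0] := eqVneq w 0; first by rewrite subrr /nc Re0 Im0 expr0n addr0 sqrtr0.
have Hw1 : nc w < d1 by apply: (lt_le_trans Hw); rewrite ge_min lexx.
have Hw2 : nc w < e / (1 + nc L) by apply: (lt_le_trans Hw); rewrite ge_min lexx orbT.
have H1 : nc ((f w - f 0) / w - L) < 1.
  have := Hd1 w w0; rewrite normE ltcR => /(_ Hw1); by rewrite normE ltcR.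
have Heq : f w - f 0 = w * (((f w - f 0) / w - L) + L).
  by rewrite subrK mulrC divfK.
rewrite Heq nc_M.
have h2 : nc ((f w - f 0) / w - L + L) <= 1 + nc L.
  apply: (le_trans (nc_D _ _)); rewrite lerD2r; exact: ltW.
have hw0 := nc_ge0 w.
have hpos : 0 < 1 + nc L by rewrite ltr_pwDl.
have : nc w * (1 + nc L) < e by rewrite -ltr_pdivlMr.
move=> H3; apply: (le_lt_trans _ H3); apply: ler_wpM2l => //.
Qed.

Lemma h_cont n (h : 'M[C]_n -> C) : holo_siegel h -> forall Z, siegel Z ->
  forall k l t, ccont (fun s => h (Z + s%:C *: symE R k l)) t.
Proof.
move=> Hh Z HZ k l t.
have HZ' := siegel_move k l t HZ.
have Hc := cder_cont0 (Hh _ HZ' k l).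
apply/ccontP => e e0; have [d d0 Hd] := Hc e e0.
exists d => // s Hs.
have := Hd (s - t)%:C; rewrite nc_R => /(_ Hs).
by rewrite scale0r addr0 -addrA -scalerDl -rmorphD /= (addrC t) subrK.
Qed.

Definition ell (h1 : 'M[C]_1 -> C) (w : C) := h1 (w%:M).

Lemma siegel1 z : 0 < Im z -> siegel (z%:M : 'M[C]_1).
Proof.
move=> hz; split; first by rewrite tr_scalar_mx.
split; first by apply/matrixP => a b; rewrite !ord1 mxE.
move=> v v0.
have hv : v 0 0 != 0.
  apply: contraNneq v0 => H; apply/eqP/matrixP => a b; by rewrite !ord1 H mxE.
rewrite !mxE big_ord1 !mxE big_ord1 !mxE /= mulr1n.
have hv2 : 0 < v ord0 0 ^+ 2 by rewrite exprn_even_gt0 //= hv.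
rewrite [_ * Im z]mulrC -mulrA -expr2; exact: mulr_gt0.
Qed.


Lemma cexpB x y : cexp (x - y) = cexp x / cexp y.
Proof.
apply: (mulIf (cexp_neq0 y)); rewrite -cexpD subrK divfK //; exact: cexp_neq0.
Qed.

Lemma cexp_ipi : cexp (0 +i* pi) = -1 :> C.
Proof. rewrite /cexp Rec Imc expR0 cospi sinpi; apply: cE; rewrite !ReIm; ring. Qed.

Lemma cexpR (r : R) : 0 < r -> cexp (ln r)%:C = r%:C.
Proof.
move=> r0; rewrite /cexp ReR ImR lnK ?posrE // cos0 sin0.
by apply: cE; rewrite !ReIm; ring.
Qed.

Lemma symE11 : symE R (ord0 : 'I_1) ord0 = 1%:M.
Proof. by apply/matrixP => a b; rewrite !ord1 !mxE. Qed.

Lemma ell_cont (h1 : 'M[C]_1 -> C) z : holo_siegel h1 -> 0 < Im z -> Ccont (ell h1) z.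
Proof.
move=> Hh hz e e0.
have Hc := cder_cont0 (Hh _ (siegel1 hz) ord0 ord0).
have [d d0 Hd] := Hc e e0.
exists d => // w Hw; have := Hd _ Hw.
rewrite symE11 scale0r addr0 /ell.
have -> : (z%:M + (w - z) *: 1%:M : 'M[C]_1) = w%:M.
  by apply/matrixP => a b; rewrite !ord1 !mxE /= !mulr1n mulr1 addrC subrK.
by [].
Qed.

Lemma ell_exp (h1 : 'M[C]_1 -> C) z : is_hn h1 -> 0 < Im z -> cexp (ell h1 z) = z.
Proof. case=> _ He _ hz; rewrite /ell He ?det_scalar1 //; exact: siegel1. Qed.

Lemma ell_iy (h1 : 'M[C]_1 -> C) (y : R) : is_hn h1 -> 0 < y ->
  ell h1 (0 +i* y) = (0 +i* (pi / 2)) + (ln y)%:C.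
Proof.
case=> _ _ Hi hy.
have hp : posdef (y%:M : 'M[R]_1).
  have eI : Immx ((0 +i* y)%:M : 'M[C]_1) = y%:M.
    by apply/matrixP => a b; rewrite !ord1 !mxE /= !mulr1n.
  have hy' : 0 < Im (0 +i* y) by rewrite Imc.
  by have [_] := siegel1 hy'; rewrite eI.
have := Hi _ hp; rewrite det_scalar1 mulr1 => <-.
rewrite /ell; congr (h1 _).
by apply/matrixP => a b; rewrite !ord1 !mxE /= !mulr1n.
Qed.

Lemma ImNV z : 0 < Im z -> 0 < Im (- z^-1).
Proof.
move=> hz; rewrite ImN ImV opprK divr_gt0 //.
by rewrite ltr_pwDr ?sqr_ge0 // exprn_gt0.
Qed.

Lemma neq0_Im z : 0 < Im z -> z != 0.
Proof. by move=> hz; apply/eqP => H; move: hz; rewrite H Im0 ltxx. Qed.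

Lemma ell_inv (h1 : 'M[C]_1 -> C) w : is_hn h1 -> 0 < Im w ->
  ell h1 (- w^-1) = (0 +i* pi) - ell h1 w.
Proof.
move=> H1 hw.
have Hh : holo_siegel h1 by case: H1.
pose u (s : R) := s%:C + (0 +i* Im w).
have hu s : 0 < Im (u s) by rewrite /u ImD ImR Imc add0r.
pose phi s := ell h1 (- (u s)^-1) + ell h1 (u s) - (0 +i* pi).
have ew : u (Re w) = w by apply: cE; rewrite /u !ReIm; ring.
suff : phi (Re w) = 0.
  rewrite /phi ew => /eqP; rewrite subr_eq0 => /eqP H.
  by rewrite -H addrK.
have cu t : ccont u t by apply: ccontD; [exact: ccont_R | exact: ccont_cst].
rewrite (@constancy phi); last first.
- move=> t; rewrite /phi cexpB cexpD !ell_exp ?ImNV // cexp_ipi.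
  have u0 := neq0_Im (hu t).
  by rewrite mulNr mulVf // divrr // unitrN unitr1.
- move=> t; apply: ccontB; last exact: ccont_cst.
  apply: ccontD; apply: ccont_comp.
  + apply: ell_cont => //; exact: ImNV.
  + apply: ccontN; apply: ccontV => //; exact: neq0_Im.
  + exact: ell_cont.
  + exact: cu.
have e0 : u 0 = 0 +i* Im w by apply: cE; rewrite /u !ReIm; ring.
have hy := hu 0; rewrite e0 Imc in hy.
rewrite /phi e0.
have -> : - (0 +i* Im w)^-1 = (0 +i* (Im w)^-1).
  apply: cE; rewrite ?ReN ?ImN ?ReV ?ImV ?Rec ?Imc.
    by rewrite mul0r oppr0.
  rewrite opprK expr2 mul0r add0r; field; exact: lt0r_neq0.
rewrite !ell_iy ?invr_gt0 // lnV ?posrE //.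
by apply: cE; rewrite !ReIm; [ring | field].
Qed.


Definition ublR j n (hjn : (j <= n)%N) (Y : 'M[R]_n) : 'M[R]_j :=
  \matrix_(a, b) Y (widen_ord hjn a) (widen_ord hjn b).

Lemma Immx_ul j n (h : (j <= n)%N) (Z : 'M[C]_n) : Immx (ulblock h Z) = ublR h (Immx Z).
Proof. by apply/matrixP => a b; rewrite !mxE. Qed.

Lemma iY_ul j n (h : (j <= n)%N) (Y : 'M[R]_n) : ulblock h (iY Y) = iY (ublR h Y).
Proof. by apply/matrixP => a b; rewrite !mxE. Qed.

Lemma ul_tr j n (h : (j <= n)%N) (Z : 'M[C]_n) : (ulblock h Z)^T = ulblock h Z^T.
Proof. by apply/matrixP => a b; rewrite !mxE. Qed.

Lemma ulR_tr j n (h : (j <= n)%N) (Y : 'M[R]_n) : (ublR h Y)^T = ublR h Y^T.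
Proof. by apply/matrixP => a b; rewrite !mxE. Qed.

Lemma ul_lin j n (h : (j <= n)%N) (A B : 'M[C]_n) c :
  ulblock h (A + c *: B) = ulblock h A + c *: ulblock h B.
Proof. by apply/matrixP => a b; rewrite !mxE. Qed.

Lemma qf_sum n (Y : 'M[R]_n) (v : 'cV[R]_n) :
  (v^T *m Y *m v) 0 0 = \sum_i \sum_k v i 0 * Y i k * v k 0.
Proof.
rewrite mxE (eq_bigr (fun k => \sum_i v i 0 * Y i k * v k 0)); last first.
  move=> k _; rewrite mxE big_distrl /=; apply: eq_bigr => i _; by rewrite mxE.
exact: exchange_big.
Qed.

Lemma posdef_ul j n (h : (j.+1 <= n)%N) (Y : 'M[R]_n) : posdef Y -> posdef (ublR h Y).
Proof.
case=> HT HP; split; first by rewrite ulR_tr HT.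
move=> v v0.
pose w : 'cV[R]_n := \col_i (if (i < j.+1)%N then v (inord i) 0 else 0).
have wE (a : 'I_j.+1) : w (widen_ord h a) 0 = v a 0.
  rewrite mxE /= ltn_ord; congr (v _ 0); apply: val_inj; by rewrite /= inordK.
have w0 : w != 0.
  apply/negP => /eqP Hw; move/negP: v0; apply; apply/eqP/matrixP => a b.
  by rewrite !ord1 -wE Hw !mxE.
have := HP w w0; rewrite !qf_sum.
suff -> : \sum_i \sum_k w i 0 * Y i k * w k 0 =
  \sum_(a < j.+1) \sum_(b < j.+1) v a 0 * ublR h Y a b * v b 0 by [].
have Hz (i : 'I_n) : ~~ (i < j.+1)%N -> w i 0 = 0 by move=> /negbTE hi; rewrite mxE hi.
rewrite (bigID (fun i : 'I_n => (i < j.+1)%N)) /= [X in _ + X]big1 ?addr0; last first.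
  move=> i hi; apply: big1 => k _; by rewrite Hz // !mul0r.
rewrite (big_ord_narrow h); apply: eq_bigr => a _.
rewrite (bigID (fun k : 'I_n => (k < j.+1)%N)) /= [X in _ + X]big1 ?addr0; last first.
  move=> k hk; by rewrite (Hz k) // mulr0.
rewrite (big_ord_narrow h); apply: eq_bigr => b _.
by rewrite !wE mxE.
Qed.


Lemma siegel_ul j n (h : (j.+1 <= n)%N) (Z : 'M[C]_n) : siegel Z -> siegel (ulblock h Z).
Proof. case=> HT HY; split; first by rewrite ul_tr HT. rewrite Immx_ul; exact: posdef_ul. Qed.

Lemma siegel_iY n (Y : 'M[R]_n) : posdef Y -> siegel (iY Y).
Proof.
case=> HT HP.
rewrite /siegel; have -> : Immx (iY Y) = Y by apply/matrixP => a b; rewrite !mxE.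
split => //; apply/matrixP => a b; by rewrite !mxE -[in RHS]HT mxE.
Qed.

Lemma det_iY n (Y : 'M[R]_n) : \det (iY Y) = 'i ^+ n * (\det Y)%:C.
Proof.
have -> : iY Y = 'i *: map_mx (real_complex R) Y.
  apply/matrixP => a b; rewrite !mxE; apply: cE; rewrite !ReIm; ring.
by rewrite detZ det_map_mx.
Qed.

Lemma ul_symE m (hle : (m <= m.+1)%N) (k l : 'I_m.+1) :
  (exists k' l', ulblock hle (symE R k l) = symE R k' l') \/ ulblock hle (symE R k l) = 0.
Proof.
case: (ltnP k m) => hk; case: (ltnP l m) => hl.
- left; exists (Ordinal hk), (Ordinal hl); apply/matrixP => a b; rewrite !mxE.
  by congr (if _ then _ else _); rewrite -!(inj_eq val_inj).
- right; apply/matrixP => a b; rewrite !mxE.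
  have hb : (widen_ord hle b == l) = false by apply/negbTE; rewrite -(inj_eq val_inj) /= neq_ltn (leq_trans (ltn_ord b) hl).
  have ha : (widen_ord hle a == l) = false by apply/negbTE; rewrite -(inj_eq val_inj) /= neq_ltn (leq_trans (ltn_ord a) hl).
  by rewrite ha hb !andbF.
- right; apply/matrixP => a b; rewrite !mxE.
  have hb : (widen_ord hle b == k) = false by apply/negbTE; rewrite -(inj_eq val_inj) /= neq_ltn (leq_trans (ltn_ord b) hk).
  have ha : (widen_ord hle a == k) = false by apply/negbTE; rewrite -(inj_eq val_inj) /= neq_ltn (leq_trans (ltn_ord a) hk).
  by rewrite ha hb !andbF.
- right; apply/matrixP => a b; rewrite !mxE.
  have hb : (widen_ord hle b == k) = false by apply/negbTE; rewrite -(inj_eq val_inj) /= neq_ltn (leq_trans (ltn_ord b) hk).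
  have ha : (widen_ord hle a == k) = false by apply/negbTE; rewrite -(inj_eq val_inj) /= neq_ltn (leq_trans (ltn_ord a) hk).
  by rewrite ha hb !andbF.
Qed.


Lemma h_step m (h1 : 'M[C]_1 -> C) (hm : 'M[C]_m.+1 -> C) (hn : 'M[C]_m.+2 -> C)
  (hle : (m.+1 <= m.+2)%N) :
  is_hn h1 -> is_hn hm -> is_hn hn ->
  (forall Z, siegel Z -> 0 < Im (\det Z / \det (ulblock hle Z))) ->
  (forall Y : 'M[R]_m.+1, posdef Y -> 0 < \det Y) ->
  forall Z, siegel Z -> hn Z = hm (ulblock hle Z) + ell h1 (\det Z / \det (ulblock hle Z)).
Proof.
move=> H1 Hm Hn Hpiv HposB Z HZ.
have [Hh1 _ _] := H1; have [Hhm Hem Him] := Hm; have [Hhn Hen Hin] := Hn.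
pose G (W : 'M[C]_m.+2) := hn W - hm (ulblock hle W) - ell h1 (\det W / \det (ulblock hle W)).
suff : G Z = 0 by rewrite /G => /eqP; rewrite subr_eq0 subr_eq => /eqP ->; rewrite addrC.
have dU0 (W : 'M[C]_m.+2) : siegel W -> \det (ulblock hle W) != 0.
  move=> HW; apply/eqP => H; move: (Hpiv W HW); by rewrite H invr0 mulr0 Im0 ltxx.
move: Z HZ; apply: path_zero.
- move=> W HW; have hq := Hpiv W HW; have HU := siegel_ul hle HW.
  rewrite /G !cexpB ell_exp // Hen // Hem //.
  by rewrite divff //; exact: neq0_Im.
- move=> W HW k l t; rewrite /G.
  apply: ccontB; first apply: ccontB.
  + exact: h_cont.
  + under eq_fun do rewrite ul_lin.
    case: (ul_symE hle k l) => [[k' [l' ->]] | ->].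
      apply: h_cont => //; exact: siegel_ul.
    under eq_fun do rewrite scaler0 addr0; exact: ccont_cst.
  + apply: ccont_comp.
      apply: ell_cont => //; apply: Hpiv; exact: siegel_move.
    apply: ccont_div; first exact: dU0 (siegel_move k l t HW).
      exact: ccont_det.
    under eq_fun do rewrite ul_lin; exact: ccont_det.
- move=> Y HY; rewrite /G iY_ul.
  have HYb := posdef_ul hle HY.
  have dYb := HposB _ HYb.
  have HYs := siegel_iY HY.
  have hq := Hpiv _ HYs.
  rewrite iY_ul in hq.
  have eq : \det (iY Y) / \det (iY (ublR hle Y)) = 0 +i* (\det Y / \det (ublR hle Y)).
    rewrite !det_iY exprS.
    have I0 : 'i ^+ m.+1 != 0 :> C.
      by rewrite expf_neq0 //; apply/eqP => /(congr1 (@complex.Im R)); rewrite Imc Im0 => /eqP; rewrite oner_eq0.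
    have b0 : (\det (ublR hle Y))%:C != 0 :> C.
      by apply/eqP => /(congr1 (@complex.Re R)); rewrite ReR Re0 => H; move: dYb; rewrite H ltxx.
    set I := 'i ^+ m.+1 in I0 *; set a := (\det Y)%:C; set b := (\det (ublR hle Y))%:C in b0 *.
    have -> : 'i * I * a / (I * b) = 'i * (a / b) by field; rewrite I0 andbT; exact: b0.
    have d0 : \det (ublR hle Y) != 0 by exact: lt0r_neq0.
    apply: cE; [rewrite -[RHS]/(0:R) | ]; rewrite !(ReM, ImM, ReV, ImV, ReR, ImR, Rei, Imi, Rec, Imc) !expr2 !mul0r !addr0.
      ring.
    field; exact: d0.
  rewrite eq in hq *; rewrite Imc in hq.
  have dY : 0 < \det Y by have := mulr_gt0 hq dYb; rewrite divfK // lt0r_neq0.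
  rewrite Hin // Him // ell_iy //.
  have lnE : ln (\det Y) = ln (\det Y / \det (ublR hle Y)) + ln (\det (ublR hle Y)).
    by rewrite -lnM ?posrE // divfK // lt0r_neq0.
  apply: cE; rewrite !ReIm; first lra.
  rewrite -[m.+2]addn2 -[m.+1]addn1 !natrD; field.
by []. Qed.


Lemma ReJ x : Re (conjc x) = Re x. Proof. by case: x. Qed.
Lemma ImJ x : Im (conjc x) = - Im x. Proof. by case: x. Qed.

Lemma Im_sum (I : Type) (r : seq I) (F : I -> C) : Im (\sum_(i <- r) F i) = \sum_(i <- r) Im (F i).
Proof. elim: r => [|a r IH]; by rewrite ?big_nil ?big_cons ?ImD ?IH. Qed.

Lemma herm_Im n (Z : 'M[C]_n) (v : 'cV[C]_n) : Z^T = Z ->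
  Im (\sum_i \sum_j conjc (v i 0) * Z i j * v j 0) =
  ((map_mx Re v)^T *m Immx Z *m map_mx Re v) 0 0 +
  ((map_mx Im v)^T *m Immx Z *m map_mx Im v) 0 0.
Proof.
move=> HT.
have HZ i j : Z j i = Z i j by rewrite -[in RHS]HT mxE.
rewrite !qf_sum Im_sum -big_split /=; apply: etrans (_ : _ = \sum_i \sum_j
  ((Re (v i 0) * Im (Z i j) * Re (v j 0) + Im (v i 0) * Im (Z i j) * Im (v j 0)) +
   (Re (v i 0) * Im (v j 0) - Im (v i 0) * Re (v j 0)) * Re (Z i j))) _.
  apply: eq_bigr => i _; rewrite Im_sum; apply: eq_bigr => j _.
  rewrite !(ImM, ReM, ReJ, ImJ); ring.
rewrite (eq_bigr (fun i => \sum_j (Re (v i 0) * Im (Z i j) * Re (v j 0) + Im (v i 0) * Im (Z i j) * Im (v j 0)) +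
   \sum_j (Re (v i 0) * Im (v j 0) - Im (v i 0) * Re (v j 0)) * Re (Z i j))); last first.
  by move=> i _; rewrite big_split.
rewrite big_split /=.
have -> : \sum_i \sum_j (Re (v i 0) * Im (v j 0) - Im (v i 0) * Re (v j 0)) * Re (Z i j) = 0.
  rewrite (eq_bigr (fun i => \sum_j Re (v i 0) * Im (v j 0) * Re (Z i j) -
       \sum_j Im (v i 0) * Re (v j 0) * Re (Z i j))); last first.
    move=> i _; rewrite -sumrB; apply: eq_bigr => j _; ring.
  rewrite sumrB exchange_big /=; apply/eqP; rewrite subr_eq0; apply/eqP.
  apply: eq_bigr => i _; apply: eq_bigr => j _; rewrite HZ; ring.
rewrite addr0; apply: eq_bigr => i _; rewrite -big_split; apply: eq_bigr => j _.
by rewrite !mxE.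
Qed.


Lemma sq_gt0 x : x != 0 -> 0 < Re x ^+ 2 + Im x ^+ 2.
Proof.
move=> x0; rewrite lt_neqAle addr_ge0 ?sqr_ge0 // andbT eq_sym.
apply: contra x0; rewrite paddr_eq0 ?sqr_ge0 // !sqrf_eq0 => /andP [/eqP h1 /eqP h2].
by apply/eqP; apply: cE; rewrite ?h1 ?h2.
Qed.

Lemma posdef_ge0 n (Y : 'M[R]_n) (w : 'cV[R]_n) : posdef Y -> 0 <= (w^T *m Y *m w) 0 0.
Proof.
case=> _ HP; have [->|w0] := eqVneq w 0; last exact/ltW/HP.
by rewrite mulmx0 mxE.
Qed.

Lemma pivot_gen n (hle : (n <= n.+1)%N) :
  (forall Z : 'M[C]_n.+1, siegel Z -> \det (ulblock hle Z) != 0) ->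
  forall Z : 'M[C]_n.+1, siegel Z -> 0 < Im (\det Z / \det (ulblock hle Z)).
Proof.
move=> HU Z HZ; have [HT HY] := HZ.
have dU := HU Z HZ; set U := ulblock hle Z in dU *.
pose v := col ord_max (\adj Z).
have Zv i : (Z *m v) i 0 = (\det Z)%:M i ord_max.
  by rewrite -mul_mx_adj !mxE; apply: eq_bigr => k _; rewrite !mxE.
have vmax : v ord_max 0 = \det U.
  rewrite /v !mxE /cofactor.
  have -> : row' ord_max (col' ord_max Z) = U.
    apply/matrixP => a b; rewrite !mxE; congr (Z _ _); apply: val_inj;
      by rewrite /= /bump leqNgt ltn_ord.
  by rewrite /= addnn -signr_odd odd_double expr0 mul1r.
have S : \sum_i \sum_j conjc (v i 0) * Z i j * v j 0 = conjc (\det U) * \det Z.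
  rewrite (eq_bigr (fun i => conjc (v i 0) * (\det Z)%:M i ord_max)); last first.
    move=> i _; rewrite -Zv [(Z *m v) i 0]mxE big_distrr; apply: eq_bigr => j _; by rewrite /= mulrA.
  rewrite (bigD1 (ord_max : 'I_n.+1)) //= big1 ?addr0.
    by rewrite vmax mxE eqxx mulr1n.
  by move=> i /negbTE hi; rewrite !mxE hi mulr0n mulr0.
have HIm := herm_Im v HT; rewrite S in HIm.
have pos : 0 < Im (conjc (\det U) * \det Z).
  rewrite HIm.
  have [a0|a0] := eqVneq (map_mx Re v) 0.
    have b0 : map_mx Im v != 0.
      apply/eqP => b0; move/eqP: dU; apply; rewrite -vmax; apply: cE.
        by have := congr1 (fun M : 'cV[R]_n.+1 => M ord_max 0) a0; rewrite !mxE.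
      by have := congr1 (fun M : 'cV[R]_n.+1 => M ord_max 0) b0; rewrite !mxE.
    rewrite a0 mulmx0 mxE add0r; by case: HY => _ /(_ _ b0).
  apply: ltr_pwDl; last exact: posdef_ge0.
  by case: HY => _ /(_ _ a0).
have key : Im (\det Z / \det U) = Im (conjc (\det U) * \det Z) / (Re (\det U) ^+ 2 + Im (\det U) ^+ 2).
  rewrite !(ImM, ReM, ImV, ReV, ReJ, ImJ); field; exact/lt0r_neq0/sq_gt0.
by rewrite key divr_gt0 // sq_gt0.
Qed.


Lemma conjcR (k : R) : conjc (k%:C) = k%:C.
Proof. by apply: cE; rewrite !(ReJ, ImJ, ReR, ImR) ?oppr0. Qed.

Lemma conjc_add : {morph (@conjc R) : a b / a + b}.
Proof. by move=> a b; apply: cE; rewrite !(ReJ, ImJ, ReD, ImD) ?opprD. Qed.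
Lemma conjc_mul : {morph (@conjc R) : a b / a * b}.
Proof. by move=> a b; apply: cE; rewrite !(ReJ, ImJ, ReM, ImM); ring. Qed.
Lemma conjcK' : involutive (@conjc R).
Proof. by move=> a; apply: cE; rewrite !(ReJ, ImJ) ?opprK. Qed.
Lemma conjc_sum (I : Type) (r : seq I) (F : I -> C) :
  conjc (\sum_(i <- r) F i) = \sum_(i <- r) conjc (F i).
Proof.
elim: r => [|a r IH]; rewrite ?big_nil ?big_cons; last by rewrite conjc_add IH.
by apply: cE; rewrite !(ReJ, ImJ, Re0, Im0) ?oppr0.
Qed.

Lemma siegel_inv n (Z : 'M[C]_n) : siegel Z -> \det Z != 0 -> siegel (- invmx Z).
Proof.
move=> HZ dZ; have [HT HY] := HZ.
have uZ : Z \in unitmx by rewrite unitmxE unitfE.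
split; first by rewrite linearN /= trmx_inv HT.
split.
  apply/matrixP => a b; rewrite !mxE.
  by have := congr1 (fun M : 'M[C]_n => M a b) (trmx_inv Z); rewrite HT mxE => ->.
move=> v v0.
pose vC := map_mx (real_complex R) v.
pose w := invmx Z *m vC.
have Zw : Z *m w = vC by rewrite /w mulKVmx.
have w0 : w != 0.
  apply/eqP => w0; move: Zw; rewrite w0 mulmx0 => /esym vC0.
  move/eqP: v0; apply; apply/matrixP => a b.
  by have := congr1 (fun M : 'cV[C]_n => Re (M a b)) vC0; rewrite !mxE.
have HIm := herm_Im w HT.
have pos : 0 < Im (\sum_i \sum_j conjc (w i 0) * Z i j * w j 0).
  rewrite HIm.
  have [a0|a0] := eqVneq (map_mx Re w) 0.
    have b0 : map_mx Im w != 0.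
      apply/eqP => b0; move/eqP: w0; apply; apply/matrixP => a b.
      apply: cE; rewrite !mxE.
        by have := congr1 (fun M : 'cV[R]_n => M a b) a0; rewrite !mxE.
      by have := congr1 (fun M : 'cV[R]_n => M a b) b0; rewrite !mxE.
    rewrite a0 mulmx0 mxE add0r; by case: HY => _ /(_ _ b0).
  apply: ltr_pwDl; last exact: posdef_ge0.
  by case: HY => _ /(_ _ a0).
suff -> : (v^T *m Immx (- invmx Z) *m v) 0 0 =
  Im (\sum_i \sum_j conjc (w i 0) * Z i j * w j 0) by [].
rewrite qf_sum.
have E1 : \sum_i \sum_k v i 0 * Immx (- invmx Z) i k * v k 0 =
    - Im (\sum_i vC i 0 * w i 0).
  rewrite Im_sum -sumrN; apply: eq_bigr => i _.
  rewrite [w i 0]mxE big_distrr Im_sum -sumrN; apply: eq_bigr => k _.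
  by rewrite !mxE ImN !(ImM, ReM, ReR, ImR); ring.
rewrite E1.
have E2 : \sum_i vC i 0 * w i 0 = conjc (\sum_i \sum_j conjc (w i 0) * Z i j * w j 0).
  rewrite conjc_sum; apply: eq_bigr => i _.
  have -> : vC i 0 = conjc ((Z *m w) i 0) by rewrite Zw mxE conjcR.
  rewrite mxE conjc_sum big_distrl conjc_sum; apply: eq_bigr => j _.
  by rewrite !conjc_mul conjcK' /= mulrC mulrA.
by rewrite E2 ImJ opprK.
Qed.


Definition o0 : 'I_3 := @Ordinal 3 0 isT.
Definition o1 : 'I_3 := @Ordinal 3 1 isT.
Definition o2 : 'I_3 := @Ordinal 3 2 isT.
Definition q0 : 'I_2 := @Ordinal 2 0 isT.
Definition q1 : 'I_2 := @Ordinal 2 1 isT.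

Definition M3 (a b c d e f g h k : C) : 'M[C]_3 :=
  \matrix_(i, j) nth 0 (nth [::] [:: [:: a; b; c]; [:: d; e; f]; [:: g; h; k]] i) j.

Lemma mx3_eta (M : 'M[C]_3) :
  M = M3 (M o0 o0) (M o0 o1) (M o0 o2) (M o1 o0) (M o1 o1) (M o1 o2) (M o2 o0) (M o2 o1) (M o2 o2).
Proof.
apply/matrixP => i j; rewrite mxE.
case: i => [[|[|[|i]]] hi] //; case: j => [[|[|[|j]]] hj] //=; congr (M _ _); exact: val_inj.
Qed.

Lemma det2 (N : 'M[C]_2) : \det N = N q0 q0 * N q1 q1 - N q0 q1 * N q1 q0.
Proof.
rewrite (expand_det_row _ q0) !big_ord_recr big_ord0 /= /cofactor !det_mx11 !mxE /=.
have -> : (ord_max : 'I_2) = q1 by exact: val_inj.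
have -> : (widen_ord (leqnSn 1) ord_max : 'I_2) = q0 by exact: val_inj.
have -> : (lift q0 ord0 : 'I_2) = q1 by exact: val_inj.
have -> : (lift q1 ord0 : 'I_2) = q0 by exact: val_inj.
rewrite expr0 expr1; ring.
Qed.

Lemma det3 a b c d e f g h k :
  \det (M3 a b c d e f g h k) = a * (e * k - f * h) - b * (d * k - f * g) + c * (d * h - e * g).
Proof.
rewrite (expand_det_row _ o0) !big_ord_recr big_ord0 /= /cofactor !det2 !mxE /=.
ring.
Qed.


Lemma piv_ne0 a b : 0 < Im (a / b) -> a != 0 /\ b != 0.
Proof.
move=> H; split; apply/eqP => E; move: H; rewrite E ?mul0r ?invr0 ?mulr0 Im0 ltxx //.
Qed.

Lemma piv1 (Z : 'M[C]_1) : siegel Z -> 0 < Im (\det Z).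
Proof.
move=> HZ; have := @pivot_gen 0 isT _ Z HZ.
rewrite det_mx00 divr1; apply => W _; by rewrite det_mx00 oner_eq0.
Qed.

Lemma detne1 (Z : 'M[C]_1) : siegel Z -> \det Z != 0.
Proof. by move=> HZ; apply: neq0_Im; exact: piv1. Qed.

Lemma piv2 (hle : (1 <= 2)%N) (Z : 'M[C]_2) : siegel Z -> 0 < Im (\det Z / \det (ulblock hle Z)).
Proof. apply: pivot_gen => W HW; apply: detne1; exact: siegel_ul. Qed.

Lemma detne2 (Z : 'M[C]_2) : siegel Z -> \det Z != 0.
Proof. by move=> HZ; case: (piv_ne0 (@piv2 isT Z HZ)). Qed.

Lemma piv3 (hle : (2 <= 3)%N) (Z : 'M[C]_3) : siegel Z -> 0 < Im (\det Z / \det (ulblock hle Z)).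
Proof. apply: pivot_gen => W HW; apply: detne2; exact: siegel_ul. Qed.

Lemma detne3 (Z : 'M[C]_3) : siegel Z -> \det Z != 0.
Proof. by move=> HZ; case: (piv_ne0 (@piv3 isT Z HZ)). Qed.

Lemma piv_iY m (hle : (m.+1 <= m.+2)%N) (Y : 'M[R]_m.+2) : 0 < \det (ublR hle Y) ->
  Im (\det (iY Y) / \det (ulblock hle (iY Y))) = \det Y / \det (ublR hle Y).
Proof.
move=> dYb; rewrite iY_ul.
have eq : \det (iY Y) / \det (iY (ublR hle Y)) = 0 +i* (\det Y / \det (ublR hle Y)).
  rewrite !det_iY exprS.
  have I0 : 'i ^+ m.+1 != 0 :> C.
    by rewrite expf_neq0 //; apply/eqP => /(congr1 (@complex.Im R)); rewrite Imc Im0 => /eqP; rewrite oner_eq0.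
  have b0 : (\det (ublR hle Y))%:C != 0 :> C.
    by apply/eqP => /(congr1 (@complex.Re R)); rewrite ReR Re0 => H; move: dYb; rewrite H ltxx.
  set I := 'i ^+ m.+1 in I0 *; set a := (\det Y)%:C; set b := (\det (ublR hle Y))%:C in b0 *.
  have -> : 'i * I * a / (I * b) = 'i * (a / b) by field; rewrite I0 andbT; exact: b0.
  have d0 : \det (ublR hle Y) != 0 by exact: lt0r_neq0.
  apply: cE; [rewrite -[RHS]/(0:R) | ]; rewrite !(ReM, ImM, ReV, ImV, ReR, ImR, Rei, Imi, Rec, Imc) !expr2 !mul0r !addr0.
    ring.
  field; exact: d0.
by rewrite eq Imc.
Qed.

Lemma posdet1 (Y : 'M[R]_1) : posdef Y -> 0 < \det Y.
Proof.
move=> HY; have := piv1 (siegel_iY HY).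
by rewrite det_iY expr1 ImM Rei Imi ReR ImR mul0r mul1r add0r.
Qed.

Lemma posdet2 (Y : 'M[R]_2) : posdef Y -> 0 < \det Y.
Proof.
move=> HY; have hle : (1 <= 2)%N by [].
have dYb := posdet1 (posdef_ul hle HY).
have := piv2 hle (siegel_iY HY); rewrite piv_iY // => H.
by have := mulr_gt0 H dYb; rewrite divfK // lt0r_neq0.
Qed.


Lemma det3E (M : 'M[C]_3) : \det M =
  M o0 o0 * (M o1 o1 * M o2 o2 - M o1 o2 * M o2 o1) - M o0 o1 * (M o1 o0 * M o2 o2 - M o1 o2 * M o2 o0)
  + M o0 o2 * (M o1 o0 * M o2 o1 - M o1 o1 * M o2 o0).
Proof. by rewrite {1}[M]mx3_eta det3. Qed.

Lemma ul2E (h : (2 <= 3)%N) (M : 'M[C]_3) :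
  \det (ulblock h M) = M o0 o0 * M o1 o1 - M o0 o1 * M o1 o0.
Proof.
rewrite det2 !mxE.
have -> : widen_ord h q0 = o0 by exact: val_inj.
have -> : widen_ord h q1 = o1 by exact: val_inj.
by [].
Qed.

Lemma ul1E (h : (1 <= 3)%N) (M : 'M[C]_3) : ulblock h M = (M o0 o0)%:M.
Proof.
apply/matrixP => a b; rewrite !ord1 !mxE /= mulr1n.
by have -> : widen_ord h ord0 = o0 by exact: val_inj.
Qed.

Lemma ul12E (h : (2 <= 3)%N) (h' : (1 <= 2)%N) (M : 'M[C]_3) :
  ulblock h' (ulblock h M) = (M o0 o0)%:M.
Proof.
apply/matrixP => a b; rewrite !ord1 !mxE /= mulr1n.
by have -> : widen_ord h (widen_ord h' ord0) = o0 by exact: val_inj.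
Qed.

Lemma adj3E (M : 'M[C]_3) :
  [/\ \adj M o0 o0 = M o1 o1 * M o2 o2 - M o1 o2 * M o2 o1,
      \adj M o0 o1 = - (M o0 o1 * M o2 o2 - M o0 o2 * M o2 o1),
      \adj M o1 o0 = - (M o1 o0 * M o2 o2 - M o1 o2 * M o2 o0) &
      \adj M o1 o1 = M o0 o0 * M o2 o2 - M o0 o2 * M o2 o0].
Proof.
rewrite [M]mx3_eta; split; rewrite !mxE /cofactor det2 !mxE /=; ring.
Qed.

Lemma WE (i k : 'I_3) : Wmx R i k = if k == rev_ord i then 1 else 0.
Proof.
rewrite mxE; congr (if _ then _ else _).
by case: i => [[|[|[|i]]] hi] //; case: k => [[|[|[|k]]] hk].
Qed.

Lemma WZW (Z : 'M[C]_3) i j : (Wmx R *m Z *m Wmx R) i j = Z (rev_ord i) (rev_ord j).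
Proof.
rewrite mxE (bigD1 (rev_ord j)) //= big1 ?addr0.
  rewrite WE rev_ordK eqxx mulr1 mxE (bigD1 (rev_ord i)) //= big1 ?addr0.
    by rewrite WE eqxx mul1r.
  by move=> k /negbTE hk; rewrite WE hk mul0r.
move=> k hk; rewrite WE.
have -> : (j == rev_ord k) = false.
  apply/negbTE; apply: contra hk => /eqP ->; by rewrite rev_ordK.
by rewrite mulr0.
Qed.

Lemma siegel_W (Z : 'M[C]_3) : siegel Z -> siegel (Wmx R *m Z *m Wmx R).
Proof.
case=> HT [HYT HY].
have HZ i j : Z j i = Z i j by rewrite -[in RHS]HT mxE.
have ImmxE (M : 'M[C]_3) i j : Immx M i j = Im (M i j) by rewrite mxE.
split; first by apply/matrixP => i j; rewrite [in LHS]mxE !WZW HZ.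
split; first by apply/matrixP => i j; rewrite [in LHS]mxE !ImmxE !WZW HZ.
move=> v v0.
pose w : 'cV[R]_3 := \col_i v (rev_ord i) 0.
have w0 : w != 0.
  apply: contra v0 => /eqP w0; apply/eqP/matrixP => i j; rewrite !ord1.
  by have := congr1 (fun M : 'cV[R]_3 => M (rev_ord i) 0) w0; rewrite !mxE rev_ordK.
suff E : \sum_j \sum_k v j 0 * Immx (Wmx R *m Z *m Wmx R) j k * v k 0 =
    \sum_i \sum_k w i 0 * Immx Z i k * w k 0.
  by rewrite qf_sum E -qf_sum; apply: HY.
rewrite (reindex_inj rev_ord_inj) /=; apply: eq_bigr => i _.
rewrite (reindex_inj rev_ord_inj) /=; apply: eq_bigr => k _.
by rewrite !ImmxE WZW !rev_ordK !mxE.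
Qed.


Lemma hform1 (h1 : 'M[C]_1 -> C) (h : (1 <= 3)%N) M : h1 (ulblock h M) = ell h1 (M o0 o0).
Proof. by rewrite ul1E. Qed.

Lemma hform2 (h1 : 'M[C]_1 -> C) (h2 : 'M[C]_2 -> C) : is_hn h1 -> is_hn h2 ->
  forall (h : (2 <= 3)%N) M, siegel M ->
  h2 (ulblock h M) = ell h1 (M o0 o0) + ell h1 (\det (ulblock h M) / M o0 o0).
Proof.
move=> H1 H2 h M HM; have hle : (1 <= 2)%N by [].
rewrite (@h_step 0 h1 h1 h2 hle H1 H1 H2 (piv2 hle) posdet1 _ (siegel_ul h HM)).
by rewrite ul12E det_scalar1.
Qed.

Lemma hform3 (h1 : 'M[C]_1 -> C) (h2 : 'M[C]_2 -> C) (h3 : 'M[C]_3 -> C) :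
  is_hn h1 -> is_hn h2 -> is_hn h3 -> forall (h : (2 <= 3)%N) M, siegel M ->
  h3 M = h2 (ulblock h M) + ell h1 (\det M / \det (ulblock h M)).
Proof. move=> H1 H2 H3 h M HM; exact: (@h_step 1 h1 h2 h3 h H1 H2 H3 (piv3 h) posdet2 _ HM). Qed.

Lemma rev0 : rev_ord o0 = o2. Proof. exact: val_inj. Qed.
Lemma rev1 : rev_ord o1 = o1. Proof. exact: val_inj. Qed.
Lemma rev2 : rev_ord o2 = o0. Proof. exact: val_inj. Qed.

Lemma rels (h : (2 <= 3)%N) (Z : 'M[C]_3) :
  \det Z != 0 -> \det (ulblock h (Wmx R *m Z *m Wmx R)) != 0 ->
  (Wmx R *m Z *m Wmx R) o0 o0 != 0 ->
  [/\ (- invmx Z) o0 o0 = - (\det (Wmx R *m Z *m Wmx R) / \det (ulblock h (Wmx R *m Z *m Wmx R)))^-1,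
      \det (ulblock h (- invmx Z)) / (- invmx Z) o0 o0 =
        - (\det (ulblock h (Wmx R *m Z *m Wmx R)) / (Wmx R *m Z *m Wmx R) o0 o0)^-1 &
      \det (- invmx Z) / \det (ulblock h (- invmx Z)) = - ((Wmx R *m Z *m Wmx R) o0 o0)^-1].
Proof.
move=> dZ dUB b00.
have uZ : Z \in unitmx by rewrite unitmxE unitfE.
have Ainv : invmx Z = (\det Z)^-1 *: \adj Z by rewrite /invmx uZ.
have [a00 a01 a10 a11] := adj3E Z.
have AE i j : (- invmx Z) i j = - ((\det Z)^-1 * \adj Z i j) by rewrite Ainv !mxE.
have detA : \det (- invmx Z) = - (\det Z)^-1.
  by rewrite -scaleN1r detZ det_inv; ring.
have dB : \det (Wmx R *m Z *m Wmx R) = \det Z.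
  by rewrite !det3E !WZW ?rev0 ?rev1 ?rev2; ring.
move: dUB b00; rewrite !ul2E dB !WZW ?rev0 ?rev1 ?rev2 => dUB b00.
rewrite detA !AE a00 a01 a10 a11.
rewrite det3E in dZ *.
split; field; rewrite ?dZ ?dUB ?b00 //=.
set e := (X in X != 0).
have -> : e = Z o2 o2 * (Z o0 o0 * (Z o1 o1 * Z o2 o2 - Z o1 o2 * Z o2 o1) -
    Z o0 o1 * (Z o1 o0 * Z o2 o2 - Z o1 o2 * Z o2 o0) +
    Z o0 o2 * (Z o1 o0 * Z o2 o1 - Z o1 o1 * Z o2 o0)) by rewrite /e; ring.
by rewrite mulf_neq0.
Qed.

End S.

Local Close Scope classical_set_scope.

Theorem claim1 (R : realType)
  (h1 : 'M[R[i]]_1 -> R[i]) (h2 : 'M[R[i]]_2 -> R[i]) (h3 : 'M[R[i]]_3 -> R[i])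
  (H1 : is_hn h1) (H2 : is_hn h2) (H3 : is_hn h3)
  (s1 s2 s3 : R[i]) (Z : 'M[R[i]]_3) (HZ : siegel Z) :
  pfun h1 h2 h3 s1 s2 s3 (- invmx Z) =
  cexp ((s1 + 2 * s2 + 3 * s3) * (0 +i* pi)) *
  pfun h1 h2 h3 s2 s1 (- s1 - s2 - s3) (Wmx R *m Z *m Wmx R).
Proof.
have dZ := detne3 HZ.
have sA := siegel_inv HZ dZ.
have sB := siegel_W HZ.
have dUB := detne2 (siegel_ul (isT : (2 <= 3)%N) sB).
have u1 : 0 < complex.Im ((Wmx R *m Z *m Wmx R) o0 o0).
  have := piv1 (siegel_ul (isT : (0 < 3)%N) sB); by rewrite ul1E det_scalar1.
have u2 : 0 < complex.Im (\det (ulblock (isT : (2 <= 3)%N) (Wmx R *m Z *m Wmx R)) /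
    (Wmx R *m Z *m Wmx R) o0 o0).
  have := piv2 (isT : (1 <= 2)%N) (siegel_ul (isT : (2 <= 3)%N) sB); by rewrite ul12E det_scalar1.
have u3 := piv3 (isT : (2 <= 3)%N) sB.
have [r1 r2 r3] := @rels R isT Z dZ dUB (neq0_Im u1).
rewrite /pfun !hform1 (hform3 H1 H2 H3 isT sA) (hform3 H1 H2 H3 isT sB).
rewrite !(hform2 H1 H2 isT) //.
rewrite r3 r2 r1 !ell_inv //.
rewrite -!cexpD; congr cexp; ring.
Qed.
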